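(* Let $\Sigma$ be a non-pure shellable rational pointed fan in $\mathbb{R}^d$ with non-pure shelling $C_1,\dots,C_s$. Then there exists a permutation $\sigma$ of $\{1,\dots,s\}$ such that $C_{\sigma(1)},\dots,C_{\sigma(s)}$ is a non-pure shelling of $\Sigma$ and $\dim C_{\sigma(1)}\ge\dots\ge\dim C_{\sigma(s)}$.
   Context: A rational pointed fan $\Sigma$ in $\mathbb{R}^d$ is a finite collection of rational pointed polyhedral cones closed under taking faces, such that the intersection of two cones of $\Sigma$ is a common face of both. Facets are maximal cones. For a cone $C$, $\mathrm{fan}(C)$ is the fan of all faces of $C$ and $\mathrm{fan}(\partial C)$ the fan of all proper faces of $C$. A shelling of a pure $k$-dimensional fan is a linear ordering $C_1,\dots,C_s$ of its facets such that either $k=0$, or: (1) $\mathrm{fan}(\partial C_1)$ has a shelling, and (2) for $1<j\le s$ the fan $\mathrm{fan}(\partial C_j)$ is pure $(k-1)$-dimensional and there is a shelling $D_1,\dots,D_{t_j}$ of $\mathrm{fan}(\partial C_j)$ with $\emptyset\neq\bigcup_{i=1}^{j-1}[\mathrm{fan}(C_i)\cap\mathrm{fan}(C_j)]=\bigcup_{l=1}^{r_j}\mathrm{fan}(D_l)$ for some $1\le r_j\le t_j$. A (not necessarily pure) fan $\Sigma$ is non-pure shellable if there is a linear ordering $C_1,\dots,C_s$ of its facets (a non-pure shelling) such that either $\dim\Sigma=0$, or: (1) $\mathrm{fan}(\partial C_1)$ has a shelling, and (2) for $1<j\le s$ there is a shelling $D_1,\dots,D_{t_j}$ of the pure fan $\mathrm{fan}(\partial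 C_j)$ with $\emptyset\neq\bigcup_{i=1}^{j-1}[\mathrm{fan}(C_i)\cap\mathrm{fan}(C_j)]=\bigcup_{l=1}^{r_j}\mathrm{fan}(D_l)$ for some $1\le r_j\le t_j$. *)

(* Defs.v *)
(* Rational pointed fans in R^d, modelled by their rational points in Q^d. *)
From mathcomp Require Import all_boot all_order all_algebra.
From Stdlib Require Import ClassicalEpsilon.
Set Implicit Arguments. Unset Strict Implicit. Unset Printing Implicit Defensive.
Import Order.TTheory GRing.Theory Num.Theory.
Local Open Scope ring_scope.

Section Fans.
Variable d : nat.

Definition vec := 'rV[rat]_d.
Definition cone := vec -> Prop.
Definition fanT := cone -> Prop.

Definition dotv (w x : vec) : rat := \sum_(i < d) w 0 i * x 0 i.

Definition cone_gen (S : seq vec) : cone :=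
  fun x => exists lam : 'I_(size S) -> rat,
    (forall i, 0 <= lam i) /\ x = \sum_(i < size S) lam i *: nth 0 S i.

Definition is_ratcone (C : cone) : Prop := exists S : seq vec, C = cone_gen S.

Definition pointed (C : cone) : Prop := forall x, C x -> C (- x) -> x = 0.

Definition face (F C : cone) : Prop :=
  exists w : vec, (forall x, C x -> 0 <= dotv w x) /\
                  F = (fun x => C x /\ dotv w x = 0).

Definition fanof (C : cone) : fanT := fun F => face F C.
Definition bdry (C : cone) : fanT := fun F => face F C /\ F <> C.

Definition is_dim (C : cone) (n : nat) : Prop :=
  (exists s : seq vec, size s = n /\ (forall x, x \in s -> C x) /\ free s) /\
  (forall s : seq vec, (forall x, x \in s -> C x) -> free s -> (size s <= n)%N).
Definition cdim (C : cone) : nat := epsilon (inhabits 0%N) (is_dim C).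

Definition is_fan (Sg : fanT) : Prop :=
  (exists l : seq cone, forall C, Sg C <-> List.In C l) /\
  (forall C, Sg C -> is_ratcone C /\ pointed C) /\
  (forall C F, Sg C -> face F C -> Sg F) /\
  (forall C D, Sg C -> Sg D ->
     face (fun x => C x /\ D x) C /\ face (fun x => C x /\ D x) D).

Definition facet (Sg : fanT) (C : cone) : Prop :=
  Sg C /\ forall D, Sg D -> (forall x, C x -> D x) -> D = C.

Definition pure_dim (Sg : fanT) (k : nat) : Prop :=
  (exists C, facet Sg C) /\ forall C, facet Sg C -> cdim C = k.

Definition facet_order (Sg : fanT) (s : nat) (C : 'I_s -> cone) : Prop :=
  injective C /\ (forall i, facet Sg (C i)) /\
  (forall F, facet Sg F -> exists i, C i = F).

Definition glue (s : nat) (C : 'I_s -> cone) (j : 'I_s)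
    (t : nat) (D : 'I_t -> cone) (r : nat) : Prop :=
  (exists F, exists i : 'I_s, (i < j)%N /\ face F (C i) /\ face F (C j)) /\
  (forall F, (exists i : 'I_s, (i < j)%N /\ face F (C i) /\ face F (C j)) <->
             (exists l : 'I_t, (l < r)%N /\ face F (D l))).

(* shelling of a pure k-dimensional fan (0-indexed) *)
Fixpoint shelling (k : nat) (Sg : fanT) (s : nat) (C : 'I_s -> cone) {struct k}
  : Prop :=
  pure_dim Sg k /\ facet_order Sg C /\
  match k with
  | 0 => True
  | k'.+1 =>
      (forall h : (0 < s)%N,
          exists t (D : 'I_t -> cone), shelling k' (bdry (C (Ordinal h))) D) /\
      (forall j : 'I_s, (0 < j)%N ->
          pure_dim (bdry (C j)) k' /\
          exists t (D : 'I_t -> cone), shelling k' (bdry (C j)) D /\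
            exists r, (1 <= r <= t)%N /\ glue C j D r)
  end.

Definition nonpure_shelling (Sg : fanT) (s : nat) (C : 'I_s -> cone) : Prop :=
  facet_order Sg C /\
  ((forall F, Sg F -> cdim F = 0%N) \/
   ((forall h : (0 < s)%N, exists t (D : 'I_t -> cone),
        shelling (cdim (C (Ordinal h))).-1 (bdry (C (Ordinal h))) D) /\
    (forall j : 'I_s, (0 < j)%N ->
        exists t (D : 'I_t -> cone), shelling (cdim (C j)).-1 (bdry (C j)) D /\
          exists r, (1 <= r <= t)%N /\ glue C j D r))).

End Fans.

(* Main.v *)
Require Import Defs.
From mathcomp Require Import all_boot all_order all_algebra all_fingroup.
From mathcomp Require Import zify.
From Stdlib Require Import ClassicalEpsilon Classical FunctionalExtensionality PropExtensionality.
Set Implicit Arguments. Unset Strict Implicit. Unset Printing Implicit Defensive.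
Import Order.TTheory GRing.Theory Num.Theory.

Section G.
Variable d : nat.
Local Open Scope ring_scope.

Lemma cone_ext (A B : cone d) : (forall x, A x <-> B x) -> A = B.
Proof.
move=> h; apply: functional_extensionality => x; apply: propositional_extensionality; exact: h.
Qed.

Lemma face_sub (F C : cone d) x : face F C -> F x -> C x.
Proof. by case=> w [_ ->] []. Qed.

Lemma dotv_sum n (a : 'I_n -> rat) (v : 'I_n -> vec d) w :
  dotv w (\sum_(k < n) a k *: v k) = \sum_(k < n) a k * dotv w (v k).
Proof.
rewrite /dotv.
under eq_bigr => i _ do rewrite summxE big_distrr /=.
rewrite exchange_big /=; apply: eq_bigr => k _.
rewrite big_distrr /=; apply: eq_bigr => i _.
by rewrite mxE mulrCA.
Qed.

Lemma free_size (s : seq (vec d)) : free s -> (size s <= d)%N.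
Proof.
rewrite /free => /eqP <-.
have := dimvS (subvf <<s>>%VS); rewrite dimvf dim_matrix.
by rewrite mul1r.
Qed.

Lemma dim_ex (C : cone d) : exists n, is_dim C n.
Proof.
pose P n := exists s : seq (vec d), size s = n /\ (forall x, x \in s -> C x) /\ free s.
pose Pb n := if excluded_middle_informative (P n) then true else false.
have PbP n : Pb n <-> P n.
  by rewrite /Pb; case: excluded_middle_informative.
have ex : exists n, Pb n.
  exists 0%N; apply/PbP; exists [::]; split=> //; split=> //.
  by rewrite /free span_nil dimv0.
have bnd : forall n, Pb n -> (n <= d)%N.
  by move=> n /PbP [s [<- [_ fs]]]; exact: free_size.
case: (ex_maxnP ex bnd) => m /PbP Pm mx.
exists m; split=> // s sC fs; apply: mx; apply/PbP; by exists s.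
Qed.

Lemma cdimP (C : cone d) : is_dim C (cdim C).
Proof. rewrite /cdim; apply: epsilon_spec; exact: dim_ex. Qed.

Lemma face_dim (F C : cone d) : face F C -> F <> C -> (cdim F < cdim C)%N.
Proof.
move=> fF neq.
have [x [Cx nFx]] : exists x, C x /\ ~ F x.
  apply: NNPP => h; apply: neq; apply: cone_ext => x; split; first exact: face_sub.
  by move=> Cx; apply: NNPP => nF; apply: h; exists x.
case: fF => w [wC eF].
have wx : dotv w x != 0.
  by apply/eqP => h; apply: nFx; rewrite eF.
case: (cdimP F) => [[s [ss [sF fs]]] _].
case: (cdimP C) => _ bndC.
rewrite -ss; apply: (bndC (x :: s)).
  move=> y; rewrite inE => /orP [/eqP -> //|ys].
  by apply: (face_sub (F:=F)); [exists w; split | apply: sF].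
rewrite free_cons fs andbT; apply/negP => xs.
have := coord_span (X := in_tuple s) xs => xe.
move: wx; rewrite xe dotv_sum big1 ?eqxx //.
move=> i _; have : F (in_tuple s)`_i.
  by apply: sF; apply: mem_nth; rewrite /= -{2}(size_tuple (in_tuple s)) ltn_ord.
by rewrite eF => -[_ ->]; rewrite mulr0.
Qed.

End G.

Section S.
Variable d : nat.

Lemma face_refl (C : cone d) : face C C.
Proof.
exists (0 : vec d)%R; split.
  by move=> x _; rewrite /dotv big1 // => i _; rewrite mxE GRing.mul0r.
apply: cone_ext => x; split=> [Cx|[]//]; split=> //.
by rewrite /dotv big1 // => i _; rewrite mxE GRing.mul0r.
Qed.

Lemma shelling_basic k (Sg : fanT d) t (D : 'I_t -> cone d) :
  shelling k Sg D -> pure_dim Sg k /\ facet_order Sg D.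
Proof. by case: k => [|k] [? [? _]]. Qed.

Lemma sub_face (Sg : fanT d) (G C : cone d) : is_fan Sg -> Sg G -> Sg C ->
  (forall x, G x -> C x) -> face G C.
Proof.
move=> [_ [_ [_ H4]]] SG SC sub.
have [_ h] := H4 _ _ SG SC.
have e : (fun x => G x /\ C x) = G.
  by apply: cone_ext => x; split=> [[]//|Gx]; split=> //; apply: sub.
by rewrite e in h.
Qed.

Definition good (Sg : fanT d) s (C : 'I_s -> cone d) :=
  facet_order Sg C /\
   ((forall h : (0 < s)%N, exists t (D : 'I_t -> cone d),
        shelling (cdim (C (Ordinal h))).-1 (bdry (C (Ordinal h))) D) /\
    (forall j : 'I_s, (0 < j)%N ->
        exists t (D : 'I_t -> cone d), shelling (cdim (C j)).-1 (bdry (C j)) D /\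
          exists r, (1 <= r <= t)%N /\ glue C j D r)).

Lemma swap (Sg : fanT d) s (C : 'I_s -> cone d) (j j' : 'I_s) :
  is_fan Sg -> good Sg C -> nat_of_ord j' = (nat_of_ord j).+1 -> (cdim (C j) < cdim (C j'))%N ->
  good Sg (fun i => C (tperm j j' i)).
Proof.
move=> fan [[inj [fac sur]] [H1 H2]] ej lt.
have fan3 := fan.2.2.1.
have j'pos : (0 < j')%N by rewrite ej.
have [t [D [shD [r [/andP [r1 rt] [gne gIff]]]]]] := H2 j' j'pos.
have [[_ pD] [_ [fD _]]] := shelling_basic shD.
have clA : forall l : 'I_t, (l < r)%N ->
    exists i : 'I_s, (i < j)%N /\ face (D l) (C i) /\ face (D l) (C j').
  move=> l lr.
  have [i [ij' [fi fj']]] := (gIff (D l)).2 (ex_intro _ l (conj lr (face_refl _))).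
  exists i; split=> //.
  case: (eqVneq i j) => [eij|nij]; last first.
    have : nat_of_ord i != nat_of_ord j by [].
    rewrite ej in ij'; lia.
  subst i.
  have cD : cdim (D l) = (cdim (C j')).-1 := pD _ (fD l).
  case: (classic (D l = C j)) => [eq|neq].
    rewrite eq in fj'.
    have sub : forall x, C j x -> C j' x by move=> x; apply: face_sub.
    have := (fac j).2 _ ((fac j').1) sub => /inj ejj.
    by move: ej; rewrite ejj; lia.
  have := face_dim fi neq; lia.
have r0 : (0 < t)%N by lia.
have [i0 [i0j _]] := clA (Ordinal r0) r1.
have jpos : (0 < j)%N by lia.
have clC : forall G, face G (C j) -> face G (C j') ->
    exists i : 'I_s, (i < j)%N /\ face G (C i).
  move=> G fGj fGj'.
  have [l [lr fGl]] := (gIff G).1 (ex_intro _ j (conj (ltac:(lia) : (j < j')%N) (conj fGj fGj'))).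
  have [i [ij [fi _]]] := clA l lr.
  exists i; split=> //.
  apply: (sub_face fan).
  - exact: fan3 _ _ (fac j).1 fGj.
  - exact: (fac i).1.
  by move=> x Gx; apply: (face_sub fi); apply: (face_sub fGl).
have tD : forall i : 'I_s, (i < j)%N -> tperm j j' i = i.
  move=> i ij; rewrite tpermD //; apply/eqP => /(congr1 (@nat_of_ord _)) /=; lia.
split.
  split; first by move=> a b /inj /perm_inj.
  split; first by move=> i; exact: fac.
  by move=> F /sur [i <-]; exists (tperm j j' i); rewrite tpermK.
split.
  move=> h; rewrite tD; [exact: H1|by []].
move=> k kpos.
case: (eqVneq k j) => [->|nkj].
  rewrite tpermL; exists t, D; split=> //; exists r; split; first by rewrite r1 rt.
  rewrite /glue /=; split.
    have [i [ij [fi fj]]] := clA (Ordinal r0) r1.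
    by exists (D (Ordinal r0)), i; rewrite (tD i ij) tpermL.
  move=> F; split.
    move=> [i [ij [fi fj]]]; rewrite (tD i ij) in fi; rewrite tpermL in fj.
    apply: (gIff F).1; exists i; split=> //; lia.
  move=> h; have [i [ij' [fi fj']]] := (gIff F).2 h.
  case: (eqVneq i j) => [eij|nij].
    subst i; have [i' [i'j fi']] := clC F fi fj'.
    by exists i'; rewrite (tD i' i'j) tpermL.
  have ij : (i < j)%N by have : nat_of_ord i != nat_of_ord j by []; lia.
  by exists i; rewrite (tD i ij) tpermL.
case: (eqVneq k j') => [->|nkj'].
  rewrite tpermR.
  have [t2 [D2 [sh2 [r2 [rr2 [gne2 gIff2]]]]]] := H2 j jpos.
  exists t2, D2; split=> //; exists r2; split=> //.
  rewrite /glue /=; split.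
    have [F [i [ij [fi fj]]]] := gne2.
    exists F, i; rewrite (tD i ij) tpermR; split=> //; lia.
  move=> F; split.
    move=> [i [ij' [fi fj]]]; rewrite tpermR in fj.
    case: (eqVneq i j) => [eij|nij].
      subst i; rewrite tpermL in fi.
      have [i' [i'j fi']] := clC F fj fi.
      by apply: (gIff2 F).1; exists i'.
    have ij : (i < j)%N by have : nat_of_ord i != nat_of_ord j by []; lia.
    rewrite (tD i ij) in fi; apply: (gIff2 F).1; by exists i.
  move=> h; have [i [ij [fi fj]]] := (gIff2 F).2 h.
  by exists i; rewrite (tD i ij) tpermR; split=> //; lia.
have tk : tperm j j' k = k by rewrite tpermD // eq_sym.
rewrite tk.
have [t3 [D3 [sh3 [r3 [rr3 [gne3 gIff3]]]]]] := H2 k kpos.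
exists t3, D3; split=> //; exists r3; split=> //.
have tb : forall i : 'I_s, (i < k)%N -> (tperm j j' i < k)%N.
  move=> i ik; case: tpermP => [eij|eij'|_ _] //.
    have : nat_of_ord k != nat_of_ord j' by []; have : nat_of_ord i = nat_of_ord j by rewrite eij. lia.
  have : nat_of_ord i = nat_of_ord j' by rewrite eij'. lia.
rewrite /glue /= tk; split.
  have [F [i [ik [fi fk]]]] := gne3.
  exists F, (tperm j j' i); rewrite tpermK; split=> //; exact: tb.
move=> F; split.
  move=> [i [ik [fi fk]]]; apply: (gIff3 F).1; exists (tperm j j' i); split=> //; exact: tb.
move=> h; have [i [ik [fi fk]]] := (gIff3 F).2 h.
by exists (tperm j j' i); rewrite tpermK; split=> //; exact: tb.
Qed.

End S.

Lemma adj_sorted s (f : 'I_s -> nat) :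
  (forall j j' : 'I_s, nat_of_ord j' = (nat_of_ord j).+1 -> (f j' <= f j)%N) ->
  forall i j : 'I_s, (i <= j)%N -> (f j <= f i)%N.
Proof.
move=> h.
suff H : forall k (i j : 'I_s), nat_of_ord j = (i + k)%N -> (f j <= f i)%N.
  by move=> i j ij; apply: (H (j - i)%N); lia.
elim=> [|k IH] i j ej.
  by have -> : j = i by apply: val_inj => /=; lia.
have lt : (j.-1 < s)%N by have := ltn_ord j; lia.
apply: (leq_trans (h (Ordinal lt) j _)); first by rewrite /=; lia.
apply: IH => /=; lia.
Qed.

Lemma mu_dec s (f : 'I_s -> nat) (j j' : 'I_s) :
  nat_of_ord j' = (nat_of_ord j).+1 -> (f j < f j')%N ->
  (\sum_(i < s) i * f (tperm j j' i) < \sum_(i < s) i * f i)%N.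
Proof.
move=> ej lt.
rewrite (reindex_inj (@perm_inj _ (tperm j j'))) /=.
under eq_bigr => i _ do rewrite tpermK.
have njj : j != j' by apply/eqP => /(congr1 (@nat_of_ord _)); lia.
have sp : forall g : 'I_s -> nat,
    (\sum_(i < s) g i = g j + g j' + \sum_(i < s | (i != j) && (i != j')) g i)%N.
  move=> g; rewrite (bigD1 j) //= (bigD1 j') /=; last by rewrite eq_sym.
  by rewrite addnA.
rewrite sp [X in (_ < X)%N]sp tpermL tpermR.
set A := (\sum_(i < s | _) _)%N.
set B := (\sum_(i < s | _) _)%N.
have -> : A = B.
  rewrite /A /B; apply: eq_bigr => i /andP [ij ij'].
  by rewrite tpermD // eq_sym.
nia.
Qed.

Theorem lemma3p3 (d : nat) (Sg : fanT d) (s : nat) (C : 'I_s -> cone d) :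
  is_fan Sg -> nonpure_shelling Sg C ->
  exists sigma : {perm 'I_s},
    nonpure_shelling Sg (fun i => C (sigma i)) /\
    (forall i j : 'I_s, (i <= j)%N -> (cdim (C (sigma j)) <= cdim (C (sigma i)))%N).
Proof.
move=> fan [fo HH].
have e1 : (fun i => C ((1%g : {perm 'I_s}) i)) = C.
  by apply: functional_extensionality => i; rewrite perm1.
case: HH => [H0|[H1 H2]].
  exists 1%g; rewrite e1; split; first by split=> //; left.
  move=> i j _; rewrite !perm1 (H0 _ (fo.2.1 i).1) (H0 _ (fo.2.1 j).1) //.
pose mu (sg : {perm 'I_s}) := (\sum_(i < s) i * cdim (C (sg i)))%N.
suff H : forall n (sg : {perm 'I_s}), (mu sg < n)%N -> good Sg (fun i => C (sg i)) ->
  exists sigma : {perm 'I_s},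
    nonpure_shelling Sg (fun i => C (sigma i)) /\
    (forall i j : 'I_s, (i <= j)%N -> (cdim (C (sigma j)) <= cdim (C (sigma i)))%N).
  by apply: (H (mu 1%g).+1 1%g) => //; rewrite e1; split=> //; split.
elim=> [//|n IH] sg lt g.
case: (classic (forall j j' : 'I_s, nat_of_ord j' = (nat_of_ord j).+1 ->
          (cdim (C (sg j')) <= cdim (C (sg j)))%N)) => [srt|nsrt].
  exists sg; split.
    by case: g => [fo' [h1 h2]]; split=> //; right.
  exact: (adj_sorted (f := fun i => cdim (C (sg i)))).
have [j hj] := not_all_ex_not _ (fun j : 'I_s => forall j' : 'I_s, nat_of_ord j' = (nat_of_ord j).+1 ->
          (cdim (C (sg j')) <= cdim (C (sg j)))%N) nsrt.
have [j' nj] := not_all_ex_not _ (fun j' : 'I_s => nat_of_ord j' = (nat_of_ord j).+1 ->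
          (cdim (C (sg j')) <= cdim (C (sg j)))%N) hj.
have [ej ltj] : nat_of_ord j' = (nat_of_ord j).+1 /\ (cdim (C (sg j)) < cdim (C (sg j')))%N.
  by apply: NNPP => hh; apply: nj => ej; apply: NNPP => hh2; apply: hh; split=> //; lia.
have eC : (fun i => C ((tperm j j' * sg)%g i)) = (fun i => (fun i => C (sg i)) (tperm j j' i)).
  by apply: functional_extensionality => i; rewrite permM.
apply: (IH (tperm j j' * sg)%g).
  have : (mu (tperm j j' * sg)%g < mu sg)%N.
    rewrite /mu; under eq_bigr => i _ do rewrite permM.
    exact: (mu_dec (f := fun i => cdim (C (sg i)))).
  lia.
rewrite eC; exact: (swap fan g ej ltj).
Qed.
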